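(* Suppose $f:\{0,1\}^n\to\{0,1\}$ is $\varepsilon$-far from every $k$-junta. Then for every quantum $k$-junta $V\in\mathcal{U}_N$ there exists a Boolean function $g:\{0,1\}^n\to\{0,1\}$ that is a $k$-junta such that $\mathrm{dist}(V,U_g)\le\mathrm{dist}(V,U_f)$, where $U_h:=\mathrm{diag}\big((-1)^{h(x)}\big)_{x\in\{0,1\}^n}$ for a Boolean function $h$.
   Context: $N=2^n$, $\mathcal{U}_N$ is the set of $N\times N$ unitaries. A Boolean function $h$ is a $k$-junta if $h(x)=g'(x_{i_1},\dots,x_{i_k})$ for some $g':\{0,1\}^k\to\{0,1\}$ and fixed indices; $f$ is $\varepsilon$-far from every $k$-junta if $\Pr_{x\sim\{0,1\}^n}[f(x)\ne g(x)]\ge\varepsilon$ for every $k$-junta $g$ ($x$ uniform). A unitary $V\in\mathcal{U}_N$ is a quantum $k$-junta if $V=W_S\otimes I_{\overline{S}}$ for some $S\subseteq[n]$ with $|S|=k$ and $W_S\in\mathcal{U}_{2^k}$ acting on the qubits in $S$. For $A,B\in\mathbb{C}^{N\times N}$, $\mathrm{dist}(A,B):=\min_{\theta\in[0,2\pi)}\frac{1}{\sqrt{2N}}\|e^{i\theta}A-B\|$ with $\|\cdot\|$ the Frobenius norm. *)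

(* Defs.v *)
From HB Require Import structures.
From mathcomp Require Import all_boot all_order all_algebra.
From mathcomp Require Import all_classical all_reals all_analysis.
From mathcomp Require Import complex.
Set Implicit Arguments. Unset Strict Implicit. Unset Printing Implicit Defensive.
Import Order.TTheory GRing.Theory Num.Theory.
Local Open Scope ring_scope.
Local Open Scope classical_set_scope.

Section QJ.
Variable R : realType.

(* computational basis labels {0,1}^n *)
Definition bits (n : nat) : finType := {ffun 'I_n -> bool}.

Definition sqmat (T : finType) := T -> T -> R[i].

Definition adj (T : finType) (A : sqmat T) : sqmat T := fun x y => conjc (A y x).
Definition mmul (T : finType) (A B : sqmat T) : sqmat T :=
  fun x y => \sum_(z : T) A x z * B z y.
Definition idm (T : finType) : sqmat T := fun x y => (x == y)%:R.

Definition unitary (T : finType) (V : sqmat T) : Prop :=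
  (forall x y, mmul V (adj V) x y = idm x y) /\
  (forall x y, mmul (adj V) V x y = idm x y).

Definition frob (T : finType) (A : sqmat T) : R :=
  Num.sqrt (\sum_(x : T) \sum_(y : T) ((@complex.Re R (A x y)) ^+ 2 + (@complex.Im R (A x y)) ^+ 2)).

Definition expi (t : R) : R[i] := (cos t +i* sin t)%C.

Definition qdist (n : nat) (A B : sqmat (bits n)) : R :=
  inf [set d : R | exists t : R, 0 <= t < 2 * pi /\
        d = (Num.sqrt (2 * (2 ^+ n)))^-1 * frob (fun x y => expi t * A x y - B x y)].

Definition junta (n k : nat) (h : bits n -> bool) : Prop :=
  exists (idx : 'I_k -> 'I_n) (g' : {ffun 'I_k -> bool} -> bool),
    forall x : bits n, h x = g' [ffun j => x (idx j)].

(* epsilon-far from every k-junta, x uniform on {0,1}^n *)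
Definition far (n k : nat) (eps : R) (f : bits n -> bool) : Prop :=
  forall g : bits n -> bool, junta k g ->
    eps <= (#|[set x : bits n | f x != g x]|%:R / (2 ^+ n) : R).

Definition restr (n : nat) (S : {set 'I_n}) (x : bits n)
  : {ffun {i : 'I_n | i \in S} -> bool} := [ffun i => x (val i)].

(* quantum k-junta: V = W_S (x) I_{S^c}, |S| = k, W_S unitary on the qubits of S *)
Definition qjunta (n k : nat) (V : sqmat (bits n)) : Prop :=
  unitary V /\
  exists (S : {set 'I_n}) (W : sqmat ({ffun {i : 'I_n | i \in S} -> bool} : finType)),
    #|S| = k /\ unitary W /\
    forall x y : bits n,
      V x y = W (restr S x) (restr S y) *
              ([forall i in ~: S, x i == y i])%:R.

Definition Uf (n : nat) (h : bits n -> bool) : sqmat (bits n) :=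
  fun x y => if x == y then (-1) ^+ h x else 0.

End QJ.

(* Main.v *)
Require Import Defs.
From HB Require Import structures.
From mathcomp Require Import all_boot all_order all_algebra.
From mathcomp Require Import all_classical all_reals all_analysis.
From mathcomp Require Import complex.
From mathcomp Require Import lra.
Import Order.TTheory GRing.Theory Num.Theory.
Local Open Scope ring_scope.

Lemma diagle (R : realType) (z : R[i]) (b : bool) :
  let s : R[i] := (-1) ^+ (complex.Re z < 0)%R in
  let u : R[i] := (-1) ^+ b in
  complex.Re (z - s) ^+ 2 + complex.Im (z - s) ^+ 2 <=
  complex.Re (z - u) ^+ 2 + complex.Im (z - u) ^+ 2.
Proof.
case: z => a c /=.
by case: ltP => ha; case: b => /=; rewrite ?expr1 ?expr0 /=; lra.
Qed.

Definition Dd {R : realType} {n : nat} (V : sqmat R (bits n)) (h : bits n -> bool) (t : R) : R :=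
  (Num.sqrt (2 * (2 ^+ n)))^-1 * frob (fun x y => expi t * V x y - Uf R h x y).

Lemma Dd_ge0 (R : realType) n V h t : 0 <= @Dd R n V h t.
Proof. by rewrite /Dd mulr_ge0 // ?invr_ge0 ?sqrtr_ge0 // /frob sqrtr_ge0. Qed.

Lemma Dle (R : realType) n (V : sqmat R (bits n)) t (g f : bits n -> bool) :
  (forall x, g x = (complex.Re (expi t * V x x) < 0)%R) -> Dd V g t <= Dd V f t.
Proof.
move=> hg; rewrite /Dd; apply: ler_wpM2l; first by rewrite invr_ge0 sqrtr_ge0.
rewrite /frob ler_sqrt; last first.
  by apply: sumr_ge0 => x _; apply: sumr_ge0 => y _; rewrite addr_ge0 ?sqr_ge0.
apply: ler_sum => x _; apply: ler_sum => y _.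
rewrite /Uf; case: eqP => [<-|_]; last by [].
by rewrite hg; apply: diagle.
Qed.

Lemma qdist_le (R : realType) n (V : sqmat R (bits n)) h t :
  0 <= t < 2 * pi -> qdist V (Uf R h) <= Dd V h t.
Proof.
move=> ht; apply: ge_inf; last by exists t.
by exists 0 => d [s [_ ->]]; apply: Dd_ge0.
Qed.

Lemma gjunta (R : realType) n k (V : sqmat R (bits n)) t : qjunta k V ->
  junta k (fun x => (complex.Re (expi t * V x x) < 0)%R).
Proof.
case=> _ [S [W [hS [_ hV]]]].
pose r (y : {ffun 'I_k -> bool}) : {ffun {i : 'I_n | i \in S} -> bool} :=
  [ffun i => y (cast_ord hS (enum_rank_in (valP i) (val i)))].
exists (fun j => enum_val (cast_ord (esym hS) j)).
exists (fun y => (complex.Re (expi t * W (r y) (r y)) < 0)%R).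
move=> x.
have -> : r [ffun j => x (enum_val (cast_ord (esym hS) j))] = restr S x.
  apply/ffunP => i; rewrite !ffunE cast_ordK enum_rankK_in //; exact: valP.
rewrite hV; congr (complex.Re (_ * _) < 0)%R.
have -> : [forall i in ~: S, x i == x i] by apply/forall_inP => i _.
by rewrite mulr1.
Qed.

Lemma junta_ext n k (h h' : bits n -> bool) : junta k h -> (forall x, h' x = h x) -> junta k h'.
Proof.
by case=> idx [g' hg] e; exists idx, g' => x; rewrite e hg.
Qed.

Theorem mainTheorem4 (R : realType) (n k : nat) (eps : R) (f : bits n -> bool) :
  far k eps f ->
  forall V : sqmat R (bits n), qjunta k V ->
  exists g : bits n -> bool, junta k g /\ qdist V (Uf R g) <= qdist V (Uf R f).
Proof.
move=> _ V hV.
pose P := fun g : {ffun bits n -> bool} => `[< junta k g >].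
pose F := fun g : {ffun bits n -> bool} => qdist V (Uf R g).
have Pg : forall t, P [ffun x => (complex.Re (expi t * V x x) < 0)%R].
  move=> t; apply/asboolP; apply: junta_ext (gjunta _ _ _ _ t hV) _ => x.
  by rewrite ffunE.
case: (arg_minP F (Pg 0)) => g /asboolP Pgg Hmin.
exists g; split; first exact: Pgg.
apply: lb_le_inf.
  exists (Dd V f 0), 0; split => //.
  by rewrite lexx /= mulr_gt0 ?pi_gt0.
move=> d [t [ht ->]].
apply: le_trans (Hmin _ (Pg t)) _.
apply: le_trans (qdist_le _ _ _ _ _ ht) _.
apply: Dle => x; by rewrite ffunE.
Qed.
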